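(* Let $V(l_1),\ldots,V(l_6)$ be six real lines in $\mathbf{P}^2$, no three of which have a point in common, and fix an affine chart $\mathbb{R}^2 \subset \mathbf{P}^2(\mathbb{R})$ (with $\mathbb{C}^2 \subset \mathbf{P}^2(\mathbb{C})$) such that none of the six lines is the line at infinity. Then there is a union $E \subset \mathbb{R}^2$ of finitely many $1$-dimensional linear subspaces with the following property. For every $b \in \mathbb{R}^2 \setminus E$ and every differentiable map $\gamma_0\colon \mathbb{R}/\mathbb{Z} \to \mathbb{R}^2$ whose image meets the real branch locus $V(l_1\cdots l_6)(\mathbb{R})$ only in the points $\gamma_0(\overline{t}_1),\ldots,\gamma_0(\overline{t}_n)$ ($n \in\{3,4,5\}$), each of which is a double point of the arrangement (a point on exactly two of the lines), the spheroid $\alpha'\colon S^2 \to \mathbf{P}^2(\mathbb{C})$ defined below meets the branch locus $V(l_1\cdots l_6)$ only in the images of the points $(\overline{t}_i, 0)$, $i=1,\ldots,n$, i.e. only in the three to five real points $\gamma_0(\overline{t}_i)$. Construction of $\alpha'$: let $\gamma'\colon (\mathbb{R}/\mathbb{Z}) \times \mathbb{R} \to \mathbb{C}^2 \subset \mathbf{P}^2(\mathbb{C})$, $(t,u) \mapsto \gamma_0(t) + \mathrm{i}\,u b$. The limits $\lim_{u\to\pm\infty}\gamma'(t,u)$ exist in $\mathbf{P}^2(\mathbb{C})$ and are independent of $t$ (both equal the point at infinity in direction $b$), so $\gamma'$ induces a continuous map $\alpha'$ from $(\mathbb{R}/\mathbb{Z}) \times [-\infty,\infty]$ with $(\mathbb{R}/\mathbb{Z})\times\{\infty\}$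 and $(\mathbb{R}/\mathbb{Z})\times\{-\infty\}$ each collapsed to a point, which is the suspension $S(S^1) \cong S^2$. *)

(* Defs.v *)
From Stdlib Require Import Reals Lra.
From Coquelicot Require Import Coquelicot.
Open Scope R_scope.

(* A line arrangement of six real lines l_i = a i * X + b i * Y + c i * Z,
   indexed by i < 6 (homogeneous coordinates [X:Y:Z], affine chart Z = 1). *)
Record arrangement := mkArr { la : nat -> R; lb : nat -> R; lc : nat -> R }.

Definition lformC (A : arrangement) (i : nat) (X Y Z : C) : C :=
  (RtoC (la A i) * X + RtoC (lb A i) * Y + RtoC (lc A i) * Z)%C.

Definition lformR (A : arrangement) (i : nat) (x y : R) : R :=
  la A i * x + lb A i * y + lc A i.

Definition not_at_infinity (A : arrangement) : Prop :=
  forall i, (i < 6)%nat -> ~ (la A i = 0 /\ lb A i = 0).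

Definition no_three_concurrent (A : arrangement) : Prop :=
  forall i j k, (i < 6)%nat -> (j < 6)%nat -> (k < 6)%nat ->
    i <> j -> j <> k -> i <> k ->
    forall X Y Z : C, ~ (X = RtoC 0 /\ Y = RtoC 0 /\ Z = RtoC 0) ->
      ~ (lformC A i X Y Z = RtoC 0 /\ lformC A j X Y Z = RtoC 0 /\ lformC A k X Y Z = RtoC 0).

Definition on_real_locus (A : arrangement) (x y : R) : Prop :=
  exists i, (i < 6)%nat /\ lformR A i x y = 0.

Definition on_locus (A : arrangement) (X Y Z : C) : Prop :=
  exists i, (i < 6)%nat /\ lformC A i X Y Z = RtoC 0.

Definition double_point (A : arrangement) (x y : R) : Prop :=
  exists j k, (j < 6)%nat /\ (k < 6)%nat /\ j <> k /\
    lformR A j x y = 0 /\ lformR A k x y = 0 /\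
    forall m, (m < 6)%nat -> lformR A m x y = 0 -> m = j \/ m = k.

(* E = finite union of the 1-dimensional linear subspaces spanned by the
   (nonzero) vectors in the list dirs *)
Definition in_union_of_lines (dirs : list (R * R)) (p : R * R) : Prop :=
  exists v, List.In v dirs /\ exists s : R, p = (s * fst v, s * snd v).

Definition gamma' (g1 g2 : R -> R) (b : R * R) (t u : R) : C * C :=
  ((RtoC (g1 t) + Ci * RtoC (u * fst b))%C, (RtoC (g2 t) + Ci * RtoC (u * snd b))%C).

(* Main.v *)
Require Import Defs.
From Stdlib Require Import Reals Lra Lia Psatz List.
From Coquelicot Require Import Coquelicot.
Open Scope R_scope.

Lemma par_in (A : arrangement) (Hinf : not_at_infinity A) (b : R * R) i :
  (i < 6)%nat -> la A i * fst b + lb A i * snd b = 0 ->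
  in_union_of_lines (map (fun i => (- lb A i, la A i)) (seq 0 6)) b.
Proof.
  intros Hi E. destruct b as [b1 b2]; simpl in E.
  exists (- lb A i, la A i); split.
  - apply in_map_iff; exists i; split; auto; apply in_seq; lia.
  - set (a := la A i) in *; set (c := lb A i) in *.
    assert (D : a * a + c * c <> 0).
    { intro H; apply (Hinf i Hi); fold a c; split; nra. }
    exists ((a * b2 - c * b1) / (a * a + c * c)); simpl.
    f_equal; field_simplify_eq; auto.
    + assert (a*(a*b1+c*b2)=0) by (rewrite E; ring). lra.
    + assert (c*(a*b1+c*b2)=0) by (rewrite E; ring). lra.
Qed.

Theorem lemma4p2 (A : arrangement)
  (Hinf : not_at_infinity A) (H3 : no_three_concurrent A) :
  exists dirs : list (R * R),
    (forall v, List.In v dirs -> v <> (0, 0)) /\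
    forall b : R * R, ~ in_union_of_lines dirs b ->
    forall (g1 g2 : R -> R) (n : nat) (ts : nat -> R),
      (* gamma0 = (g1, g2) : R/Z -> R^2 differentiable *)
      derivable g1 -> derivable g2 ->
      (forall t, g1 (t + 1) = g1 t /\ g2 (t + 1) = g2 t) ->
      (3 <= n <= 5)%nat ->
      (* the points gamma0(t_k), k < n, are pairwise distinct double points *)
      (forall k l, (k < n)%nat -> (l < n)%nat -> k <> l ->
         (g1 (ts k), g2 (ts k)) <> (g1 (ts l), g2 (ts l))) ->
      (forall k, (k < n)%nat -> double_point A (g1 (ts k)) (g2 (ts k))) ->
      (* the image of gamma0 meets the real branch locus only in these points *)
      (forall t, on_real_locus A (g1 t) (g2 t) ->
         exists k, (k < n)%nat /\ (g1 t, g2 t) = (g1 (ts k), g2 (ts k))) ->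
      (* conclusion: alpha' meets V(l_1...l_6) only in the points gamma0(t_k):
         (i) the collapsed point at infinity [b1 : b2 : 0] is not on the locus *)
      ~ on_locus A (RtoC (fst b)) (RtoC (snd b)) (RtoC 0) /\
      (* (ii) the finite points gamma'(t,u) = gamma0(t) + i u b *)
      (forall t u, on_locus A (fst (gamma' g1 g2 b t u)) (snd (gamma' g1 g2 b t u)) (RtoC 1) ->
         exists k, (k < n)%nat /\
           gamma' g1 g2 b t u = (RtoC (g1 (ts k)), RtoC (g2 (ts k)))).
Proof.
  exists (map (fun i => (- lb A i, la A i)) (seq 0 6)). split.
  { intros v Hv; apply in_map_iff in Hv; destruct Hv as [i [<- Hi]].
    apply in_seq in Hi. intro E; injection E; intros E1 E2.
    apply (Hinf i); [lia|]; split; lra. }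
  intros b Hb g1 g2 n ts _ _ _ _ _ _ Hloc. split.
  - intros [i [Hi E]]. apply Hb; apply (par_in A Hinf b i Hi).
    unfold lformC, RtoC, Cplus, Cmult in E; simpl in E.
    injection E; intros; lra.
  - intros t u [i [Hi E]].
    destruct b as [b1 b2].
    unfold lformC, gamma', RtoC, Cplus, Cmult, Ci in E; simpl in E.
    injection E; intros E2 E1.
    assert (Hu : u = 0).
    { destruct (Req_dec u 0) as [|Hu]; auto. exfalso; apply Hb.
      apply (par_in A Hinf (b1, b2) i Hi); simpl.
      apply Rmult_eq_reg_l with u; auto. nra. }
    subst u.
    destruct (Hloc t) as [k [Hk Ek]].
    { exists i; split; auto; unfold lformR; nra. }
    exists k; split; auto. injection Ek; intros F2 F1.
    unfold gamma', RtoC, Cplus, Cmult, Ci; simpl. rewrite <- F1, <- F2.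
    f_equal; f_equal; ring.
Qed.
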